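(* Let $\kappa$ be an uncountable regular cardinal, let $\mathcal{I}$ be a $\kappa$-complete proper ideal on $\kappa$ containing every bounded subset of $\kappa$, and let $\nu\in\{2,\kappa\}$. Let $\varphi\colon\mathrm{Fn}_{\mathcal{I}}({}^{\kappa}\nu)\to\mathrm{Fn}_{\mathcal{I}}({}^{\kappa}\nu)$ be continuous. Then $\varphi^*\colon{}^{\kappa}\nu\to{}^{\kappa}\nu$ is continuous with respect to $\tau_{\mathcal{I}}$ on both sides.
   Context: ${}^{\kappa}\nu$ is the set of functions $\kappa\to\nu$, $\mathrm{Fn}_{\mathcal{I}}({}^{\kappa}\nu)$ the set of functions $f\colon D\to\nu$ with $D\in\mathcal{I}$, $\mathbf{N}_f=\{x:f\subseteq x\}$, and $\tau_{\mathcal{I}}$ the topology on ${}^{\kappa}\nu$ generated by the sets $\mathbf{N}_f$. A map $\varphi\colon\mathrm{Fn}_{\mathcal{I}}\to\mathrm{Fn}_{\mathcal{I}}$ is monotone if $f\subseteq g$ implies $\varphi(f)\subseteq\varphi(g)$; it is continuous if it is monotone and for all $x\in{}^{\kappa}\nu$ and $D\in\mathcal{I}$ there is $E\in\mathcal{I}$ with $D\subseteq\mathrm{dom}(\varphi(x\restriction E))$. For continuous $\varphi$, $\varphi^*(x)=\lim_{D\in\mathcal{I}}\varphi(x\restriction D)$, the limit of the net indexed by the directed set $(\mathcal{I},\subseteq)$ in $({}^{\kappa}\nu,\tau_{\mathcal{I}})$ (identifying $\varphi(x\restriction D)$ with any point of ${}^{\kappa}\nu$ extending it is unnecessary: explicitly,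 $\varphi^*(x)$ is the unique $z\in{}^{\kappa}\nu$ such that for every $D\in\mathcal{I}$ there is $E\in\mathcal{I}$ with $z\restriction D=\varphi(x\restriction E')\restriction D$ for all $E'\in\mathcal{I}$ with $E\subseteq E'$). *)

(* Defs.v *)
From Stdlib Require Import ClassicalEpsilon ClassicalDescription.

Definition injective {A B : Type} (f : A -> B) : Prop :=
  forall x y, f x = f y -> x = y.
Definition card_le (A B : Type) : Prop := exists f : A -> B, injective f.
Definition card_lt (A B : Type) : Prop := card_le A B /\ ~ card_le B A.

Definition subset {K : Type} (A B : K -> Prop) : Prop := forall a, A a -> B a.

(** * The cardinal kappa, as a type K of ordinals with its well-order lt *)
Definition strict_well_order {K : Type} (lt : K -> K -> Prop) : Prop :=
  well_founded lt /\
  (forall a b c, lt a b -> lt b c -> lt a c) /\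
  (forall a b, lt a b \/ a = b \/ lt b a).

Definition is_cardinal {K : Type} (lt : K -> K -> Prop) : Prop :=
  strict_well_order lt /\ forall a : K, card_lt {b : K | lt b a} K.

Definition uncountable (K : Type) : Prop := ~ card_le K nat.

Definition bounded {K : Type} (lt : K -> K -> Prop) (S : K -> Prop) : Prop :=
  exists a, forall b, S b -> lt b a.

Definition regular {K : Type} (lt : K -> K -> Prop) : Prop :=
  forall S : K -> Prop, card_lt {b : K | S b} K -> bounded lt S.

Definition uncountable_regular_cardinal {K : Type} (lt : K -> K -> Prop) : Prop :=
  is_cardinal lt /\ uncountable K /\ regular lt.

Definition kappa_complete_proper_ideal {K : Type} (lt : K -> K -> Prop)
    (I : (K -> Prop) -> Prop) : Prop :=
  (forall A B, I B -> subset A B -> I A) /\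
  (forall (J : Type) (A : J -> K -> Prop),
      card_lt J K -> (forall j, I (A j)) -> I (fun a => exists j, A j a)) /\
  ~ I (fun _ => True).

Definition contains_bounded {K : Type} (lt : K -> K -> Prop)
    (I : (K -> Prop) -> Prop) : Prop :=
  forall S, bounded lt S -> I S.

Definition pfun (K V : Type) := K -> option V.

Definition dom {K V : Type} (f : pfun K V) : K -> Prop := fun a => f a <> None.

Definition Fn {K V : Type} (I : (K -> Prop) -> Prop) (f : pfun K V) : Prop :=
  I (dom f).

Definition psub {K V : Type} (f g : pfun K V) : Prop :=
  forall a v, f a = Some v -> g a = Some v.

Definition N {K V : Type} (f : pfun K V) : (K -> V) -> Prop :=
  fun x => forall a v, f a = Some v -> x a = v.

Definition restrict {K V : Type} (x : K -> V) (E : K -> Prop) : pfun K V :=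
  fun a => if excluded_middle_informative (E a) then Some (x a) else None.

Inductive tau_open {K V : Type} (I : (K -> Prop) -> Prop) : ((K -> V) -> Prop) -> Prop :=
| open_basic (f : pfun K V) : Fn I f -> tau_open I (N f)
| open_full : tau_open I (fun _ => True)
| open_inter (U W : (K -> V) -> Prop) :
    tau_open I U -> tau_open I W -> tau_open I (fun x => U x /\ W x)
| open_union (F : ((K -> V) -> Prop) -> Prop) :
    (forall U, F U -> tau_open I U) -> tau_open I (fun x => exists U, F U /\ U x).

Definition tau_continuous {K V : Type} (I : (K -> Prop) -> Prop)
    (G : (K -> V) -> (K -> V)) : Prop :=
  forall U, tau_open I U -> tau_open I (fun x => U (G x)).

Definition maps_Fn {K V : Type} (I : (K -> Prop) -> Prop)
    (phi : pfun K V -> pfun K V) : Prop :=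
  forall f, Fn I f -> Fn I (phi f).

Definition monotone {K V : Type} (I : (K -> Prop) -> Prop)
    (phi : pfun K V -> pfun K V) : Prop :=
  forall f g, Fn I f -> Fn I g -> psub f g -> psub (phi f) (phi g).

Definition phi_continuous {K V : Type} (I : (K -> Prop) -> Prop)
    (phi : pfun K V -> pfun K V) : Prop :=
  monotone I phi /\
  forall (x : K -> V) (D : K -> Prop), I D ->
    exists E, I E /\ subset D (dom (phi (restrict x E))).

(** * phi^*(x) = lim_{D ∈ I} phi(x|D) *)
Definition is_limit {K V : Type} (I : (K -> Prop) -> Prop)
    (phi : pfun K V -> pfun K V) (x z : K -> V) : Prop :=
  forall D, I D -> exists E, I E /\
    forall E', I E' -> subset E E' ->
      forall a, D a -> phi (restrict x E') a = Some (z a).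

Definition phistar {K V : Type} (I : (K -> Prop) -> Prop)
    (phi : pfun K V -> pfun K V) (x : K -> V) : K -> V :=
  epsilon (inhabits x) (is_limit I phi x).

(* Main.v *)
Require Import Defs.
From Stdlib Require Import ClassicalEpsilon ClassicalDescription Classical FunctionalExtensionality PropExtensionality.

Lemma ext_open {K V : Type} (I : (K -> Prop) -> Prop) (U W : (K -> V) -> Prop) :
  tau_open I U -> (forall x, U x <-> W x) -> tau_open I W.
Proof.
  intros H E. assert (U = W) as <-; [|exact H].
  apply functional_extensionality; intro x; apply propositional_extensionality; apply E.
Qed.

Lemma bool_lt (K : Type) : uncountable K -> card_lt bool K.
Proof.
  intros HU. split.
  - destruct (classic (exists k : K, True)) as [[k0 _]|Hn].
    + destruct (classic (exists k1 : K, k1 <> k0)) as [[k1 Hk]|Hn].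
      * exists (fun b : bool => if b then k0 else k1).
        intros [] [] H; auto; congruence.
      * exfalso; apply HU. exists (fun _ => 0). intros x y _.
        assert (x = k0) by (apply NNPP; intro; apply Hn; eauto).
        assert (y = k0) by (apply NNPP; intro; apply Hn; eauto). congruence.
    + exfalso; apply HU. exists (fun _ => 0). intros x; exfalso; apply Hn; eauto.
  - intros [f Hf]. apply HU. exists (fun k => if f k then 0 else 1).
    intros x y H. apply Hf. destruct (f x), (f y); auto; discriminate.
Qed.

Section S.
Variables (K : Type) (I : (K -> Prop) -> Prop) (V : Type) (phi : pfun K V -> pfun K V).
Hypothesis Hdown : forall A B, I B -> subset A B -> I A.
Hypothesis Hunion : forall A B, I A -> I B -> I (fun a => A a \/ B a).
Hypothesis Hmon : monotone I phi.
Hypothesis Hcont : forall (x : K -> V) (D : K -> Prop), I D ->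
    exists E, I E /\ subset D (dom (phi (restrict x E))).

Lemma Fn_restrict (x : K -> V) E : I E -> Fn I (restrict x E).
Proof.
  intros H. apply (Hdown _ E H). intros a Ha. unfold dom, restrict in Ha.
  destruct (excluded_middle_informative (E a)); congruence.
Qed.

Lemma restrict_psub (x y : K -> V) (E E' : K -> Prop) :
  subset E E' -> (forall a, E a -> x a = y a) -> psub (restrict x E) (restrict y E').
Proof.
  intros HS Hxy a v. unfold restrict.
  destruct (excluded_middle_informative (E a)) as [e|e]; [|discriminate].
  destruct (excluded_middle_informative (E' a)) as [e'|e']; [|exfalso; auto].
  intros Hv; inversion Hv; subst; f_equal; symmetry; auto.
Qed.

Lemma lim_exists x : exists z, is_limit I phi x z.
Proof.
  set (P := fun a v => forall E, I E -> forall w, phi (restrict x E) a = Some w -> w = v).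
  assert (HP : forall a, exists v, P a v).
  { intro a. destruct (classic (exists E w, I E /\ phi (restrict x E) a = Some w))
      as [[E [w [HE Hw]]]|Hn].
    - exists w. intros E2 HE2 w2 Hw2.
      assert (Hu := Hunion _ _ HE HE2).
      assert (H1 := Hmon _ _ (Fn_restrict x E HE) (Fn_restrict x _ Hu)
        (restrict_psub x x E _ (fun b h => or_introl h) (fun _ _ => eq_refl)) a w Hw).
      assert (H2 := Hmon _ _ (Fn_restrict x E2 HE2) (Fn_restrict x _ Hu)
        (restrict_psub x x E2 _ (fun b h => or_intror h) (fun _ _ => eq_refl)) a w2 Hw2).
      congruence.
    - exists (x a). intros E HE w Hw. exfalso; apply Hn; eauto. }
  exists (fun a => epsilon (inhabits (x a)) (P a)).
  intros D HD. destruct (Hcont x D HD) as [E [HE HS]]. exists E; split; auto.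
  intros E' HE' HEE' a Ha.
  specialize (HS a Ha). unfold dom in HS.
  destruct (phi (restrict x E) a) as [w|] eqn:Hw; [|congruence].
  assert (H1 := Hmon _ _ (Fn_restrict x E HE) (Fn_restrict x _ HE')
        (restrict_psub x x E _ HEE' (fun _ _ => eq_refl)) a w Hw).
  rewrite H1. f_equal.
  apply (epsilon_spec (inhabits (x a)) (P a) (HP a) E HE w Hw).
Qed.

Lemma lim x : is_limit I phi x (phistar I phi x).
Proof. unfold phistar. apply epsilon_spec, lim_exists. Qed.

Lemma basic f : Fn I f -> tau_open I (fun x => N f (phistar I phi x)).
Proof.
  intros Hf.
  set (F := fun U : (K -> V) -> Prop => exists g, Fn I g /\ U = N g /\
              forall y, N g y -> N f (phistar I phi y)).
  apply (ext_open I (fun x => exists U, F U /\ U x)).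
  { apply open_union. intros U [g [Hg [-> _]]]. apply open_basic; auto. }
  intro x; split.
  - intros [U [[g [_ [-> Hy]]] HU]]. auto.
  - intros Hx. destruct (lim x (dom f) Hf) as [E [HE HL]].
    exists (N (restrict x E)). split.
    + exists (restrict x E). split; [apply Fn_restrict; auto|split; auto].
      intros y Hy a v Hav.
      assert (Hd : dom f a) by (unfold dom; congruence).
      destruct (lim y (dom f) Hf) as [E2 [HE2 HL2]].
      assert (Hu := Hunion _ _ HE HE2).
      assert (A1 := HL2 _ Hu (fun b h => or_intror h) a Hd).
      assert (A2 := HL E HE (fun b h => h) a Hd).
      assert (Hxy : forall b, E b -> x b = y b).
      { intros b Hb. symmetry. apply Hy. unfold restrict.
        destruct (excluded_middle_informative (E b)); [reflexivity|contradiction]. }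
      assert (A3 := Hmon _ _ (Fn_restrict x E HE) (Fn_restrict y _ Hu)
        (restrict_psub x y E _ (fun b h => or_introl h) Hxy) a _ A2).
      rewrite (Hx a v Hav) in A3. congruence.
    + intros a v. unfold restrict.
      destruct (excluded_middle_informative (E a)); [|discriminate].
      intro H; inversion H; auto.
Qed.
End S.

Theorem proposition3p2 (K : Type) (lt : K -> K -> Prop)
    (I : (K -> Prop) -> Prop) (V : Type) (phi : pfun K V -> pfun K V) :
  uncountable_regular_cardinal lt ->
  kappa_complete_proper_ideal lt I ->
  contains_bounded lt I ->
  (V = bool \/ V = K) ->
  maps_Fn I phi ->
  phi_continuous I phi ->
  tau_continuous I (phistar I phi).
Proof.
  intros [_ [Hunc _]] [Hdown [Hcomp _]] _ _ _ [Hmon Hcont].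
  assert (Hunion : forall A B, I A -> I B -> I (fun a => A a \/ B a)).
  { intros A B HA HB.
    assert (H := Hcomp bool (fun b => if b then A else B) (bool_lt K Hunc)
                   (fun b => if b as b0 return I (if b0 then A else B) then HA else HB)).
    apply (Hdown _ _ H). intros a [Ha|Ha]; [exists true|exists false]; exact Ha. }
  intros U HU. induction HU.
  - apply basic; [exact Hdown|exact Hunion|exact Hmon|exact Hcont|assumption].
  - apply open_full.
  - apply open_inter; auto.
  - apply (ext_open I (fun x => exists W, (exists U, F U /\ W = (fun y => U (phistar I phi y))) /\ W x)).
    + apply open_union. intros W [U [HF ->]]. auto.
    + intro x; split.
      * intros [W [[U [HF ->]] HW]]. eauto.
      * intros [U [HF HUx]]. exists (fun y => U (phistar I phi y)). split; [exists U; split; auto|exact HUx].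
Qed.
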